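(* Let $b\ge 1$ and let $D_1(l),\dots,D_b(l)$ and $D_1(l+1),\dots,D_b(l+1)$ be real numbers such that, for each level $m\in\{l,l+1\}$, the numbers $D_1(m),\dots,D_b(m)$ are nonzero with pairwise distinct absolute values, and $D_i(l+1)\le D_i(l)$ for all $i$. For $m\in\{l,l+1\}$ let $T^+(m)=\sum_{i=1}^b R_i(m)\mathbf{1}\{D_i(m)>0\}$, where $R_i(m)$ is the rank of $|D_i(m)|$ among $\{|D_1(m)|,\dots,|D_b(m)|\}$ (rank $1$ for the smallest), and let $P(m)=\{i:D_i(m)>0\}$. If $P(l+1)\subsetneq P(l)$, then $T^+(l+1)<T^+(l)$.
   Context: $T^+(m)$ is the Wilcoxon signed-rank (positive rank sum) statistic of the values $D_1(m),\dots,D_b(m)$. *)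

(* Defs.v *)
From HB Require Import structures.
From mathcomp Require Import all_boot all_order all_algebra.
From mathcomp Require Import reals.
Set Implicit Arguments. Unset Strict Implicit. Unset Printing Implicit Defensive.
Import Order.TTheory GRing.Theory Num.Theory.
Local Open Scope ring_scope.

Definition absrank (R : realDomainType) (b : nat) (D : 'I_b -> R) (i : 'I_b) : nat :=
  #|[set j : 'I_b | `|D j| <= `|D i|]|.

Local Close Scope ring_scope.
Definition Tplus (R : realDomainType) (b : nat) (D : 'I_b -> R) : nat :=
  \sum_(i < b | (0 < D i)%R) absrank D i.

Local Open Scope ring_scope.
Definition Ppos (R : realDomainType) (b : nat) (D : 'I_b -> R) : {set 'I_b} :=
  [set i : 'I_b | 0 < D i].

(* Main.v *)
Require Import Defs.
From HB Require Import structures.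
From mathcomp Require Import all_boot all_order all_algebra.
From mathcomp Require Import reals.
From mathcomp Require Import lra zify.
Import Order.TTheory GRing.Theory Num.Theory.
Local Open Scope ring_scope.

Lemma pt_off (R : realDomainType) (x y : R) : x != 0 -> y != 0 -> `|x| != `|y| ->
  addn (nat_of_bool ((0 < x) && (`|y| <= `|x|))) (nat_of_bool ((0 < y) && (`|x| <= `|y|))) = nat_of_bool (0 < x + y).
Proof.
move=> x0 y0 xy.
have [hx|hx] : x < 0 \/ 0 < x by case: ltgtP x0 => // ?; [left|right].
- have [hy|hy] : y < 0 \/ 0 < y by case: ltgtP y0 => // ?; [left|right].
  + rewrite (ltr0_norm hx) (ltr0_norm hy) in xy *.
    have -> : (0 < x) = false by apply/negbTE; rewrite -leNgt; lra.
    have -> : (0 < y) = false by apply/negbTE; rewrite -leNgt; lra.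
    have -> : (0 < x + y) = false by apply/negbTE; rewrite -leNgt; lra.
    by [].
  + rewrite (ltr0_norm hx) (gtr0_norm hy) in xy *.
    have -> : (0 < x) = false by apply/negbTE; rewrite -leNgt; lra.
    rewrite hy /=.
    case: (lerP (-x) y) => h.
    * have h' : -x < y by move: xy; rewrite lt_neqAle h andbT eq_sym.
      have -> : (0 < x + y) = true by lra.
      by [].
    * have -> : (0 < x + y) = false by apply/negbTE; rewrite -leNgt; lra.
      by [].
- have [hy|hy] : y < 0 \/ 0 < y by case: ltgtP y0 => // ?; [left|right].
  + rewrite (gtr0_norm hx) (ltr0_norm hy) in xy *.
    have -> : (0 < y) = false by apply/negbTE; rewrite -leNgt; lra.
    rewrite hx /= addn0.
    case: (lerP (-y) x) => h.
    * have h' : -y < x by move: xy; rewrite lt_neqAle h andbT eq_sym.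
      have -> : (0 < x + y) = true by lra.
      by [].
    * have -> : (0 < x + y) = false by apply/negbTE; rewrite -leNgt; lra.
      by [].
  + rewrite (gtr0_norm hx) (gtr0_norm hy) in xy *.
    rewrite hx hy /=.
    have -> : (0 < x + y) = true by lra.
    case: (lerP y x) => h.
    * have -> : (x <= y) = false by apply/negbTE; rewrite -ltNge lt_neqAle h andbT; move: xy; rewrite eq_sym.
      by [].
    * by rewrite (ltW h).
Qed.

Definition W (R : realDomainType) (b : nat) (D : 'I_b -> R) : nat :=
  \sum_(i < b) \sum_(j < b) nat_of_bool (0 < D i + D j)%R.
Arguments W {R b}.

Lemma Tplus2 (R : realDomainType) (b : nat) (D : 'I_b -> R) :
  (forall i, D i != 0) -> (forall i j, i != j -> `|D i| != `|D j|) ->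
  (Tplus D * 2 = W D + #|Ppos D|)%N.
Proof.
move=> nz dis.
pose f i j := nat_of_bool ((0 < D i) && (`|D j| <= `|D i|))%R.
have eT : Tplus D = \sum_(i < b) \sum_(j < b) f i j.
  rewrite /Tplus big_mkcond /=; apply: eq_bigr => i _.
  rewrite /f /absrank; case: (0 < D i) => /=.
  - by rewrite -sum1_card big_mkcond /=; apply: eq_bigr => j _; rewrite inE; case: ifP.
  - by rewrite big1.
have eP : #|Ppos D| = \sum_(i < b) \sum_(j < b) nat_of_bool ((i == j) && (0 < D i))%R.
  rewrite /Ppos -sum1_card big_mkcond /=; apply: eq_bigr => i _.
  rewrite (bigD1 i) //= eqxx /= big1 ?addn0; first by rewrite inE; case: (0 < D i).
  by move=> j /negbTE; rewrite eq_sym => ->.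
rewrite eT eP /W muln2 -addnn.
rewrite {2}exchange_big /= -!big_split /=; apply: eq_bigr => i _.
rewrite -!big_split /=; apply: eq_bigr => j _.
case: (eqVneq i j) => [<-|ij].
  rewrite /f lexx !andbT.
  have [h|h] : D i < 0 \/ 0 < D i by case: ltgtP (nz i) => // ?; [left|right].
  - have -> : (0 < D i) = false by apply/negbTE; rewrite -leNgt; lra.
    have -> : (0 < D i + D i) = false by apply/negbTE; rewrite -leNgt; lra.
    by [].
  - rewrite h; have -> : (0 < D i + D i) = true by lra.
    by [].
rewrite /f /= addn0.
exact: pt_off (nz i) (nz j) (dis _ _ ij).
Qed.

Arguments Tplus2 {R b D}.

Theorem mainTheorem4 (R : realType) (b : nat) (Dl Dl1 : 'I_b -> R) :
  (1 <= b)%N ->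
  (forall i, Dl i != 0) ->
  (forall i, Dl1 i != 0) ->
  (forall i j, i != j -> `|Dl i| != `|Dl j|) ->
  (forall i j, i != j -> `|Dl1 i| != `|Dl1 j|) ->
  (forall i, Dl1 i <= Dl i) ->
  Ppos Dl1 \proper Ppos Dl ->
  (Tplus Dl1 < Tplus Dl)%N.
Proof.
move=> _ nz nz1 d d1 le pr.
have h := Tplus2 nz d; have h1 := Tplus2 nz1 d1.
have hW : (W Dl1 <= W Dl)%N.
  apply: leq_sum => i _; apply: leq_sum => j _.
  case: (boolP (0 < Dl1 i + Dl1 j)) => //= H.
  have -> : (0 < Dl i + Dl j) = true by have := le i; have := le j; lra.
  by [].
have hP := proper_card pr.
lia.
Qed.
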